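(* Let $\Phi$ be a finite-valued Young function with $\Phi(t)\neq0$ for $t>0$, and suppose $q_\Phi>1$. Then there is a strictly convex Young function which is equivalent to $\Phi$.
   Context: A Young function is a map $\Phi:[0,\infty)\to[0,\infty]$ which is convex, satisfies $\Phi(0)=0$ and $\lim_{t\to\infty}\Phi(t)=+\infty$. Two Young functions $\Phi_1,\Phi_2$ are equivalent if there is $C\ge1$ with $C^{-1}\Phi_2\le\Phi_1\le C\Phi_2$ on $[0,\infty)$. For a finite-valued Young function positive on $(0,\infty)$, $q_\Phi=\inf_{t>0}\frac{t\Phi'_+(t)}{\Phi(t)}$, where $\Phi'_+$ is the right derivative. *)

(* Defs.v *)
From Stdlib Require Import Reals.
From Coquelicot Require Import Coquelicot.
Open Scope R_scope.

Definition convex_nonneg (f : R -> R) : Prop :=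
  forall x y s, 0 <= x -> 0 <= y -> 0 <= s <= 1 ->
    f (s * x + (1 - s) * y) <= s * f x + (1 - s) * f y.

Definition strictly_convex_nonneg (f : R -> R) : Prop :=
  forall x y s, 0 <= x -> 0 <= y -> x <> y -> 0 < s < 1 ->
    f (s * x + (1 - s) * y) < s * f x + (1 - s) * f y.

(* A (finite-valued) Young function: only its values on [0,+oo) matter. *)
Definition young (f : R -> R) : Prop :=
  (forall t, 0 <= t -> 0 <= f t) /\
  convex_nonneg f /\
  f 0 = 0 /\
  is_lim f p_infty p_infty.

Definition young_equiv (f g : R -> R) : Prop :=
  exists C, 1 <= C /\
    forall t, 0 <= t -> g t / C <= f t /\ f t <= C * g t.

Definition is_right_deriv (f : R -> R) (t l : R) : Prop :=
  filterlim (fun h => (f (t + h) - f t) / h) (at_right 0) (locally l).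

Definition q_index (f : R -> R) : Rbar :=
  Glb_Rbar (fun x => exists t l, 0 < t /\ is_right_deriv f t l /\
                                  x = t * l / f t).

(* Main.v *)
Require Import Defs.
From Stdlib Require Import Reals Lra Psatz.
From Coquelicot Require Import Coquelicot.
Open Scope R_scope.

Definition kfun (u : R) : R := 2 * u - 1 + / (u + 1).

Lemma inv_convex (U V s : R) : 0 < U -> 0 < V -> 0 <= s <= 1 ->
  / (s * U + (1 - s) * V) <= s / U + (1 - s) / V /\
  (U <> V -> 0 < s < 1 -> / (s * U + (1 - s) * V) < s / U + (1 - s) / V).
Proof.
  intros HU HV Hs.
  assert (HW : 0 < s * U + (1 - s) * V) by nra.
  set (W := s * U + (1 - s) * V) in *.
  assert (E : s / U + (1 - s) / V - / W = s * (1 - s) * ((U - V) * (U - V)) / (U * V * W)).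
  { unfold W in *. field. lra. }
  assert (HP : 0 < U * V * W) by (apply Rmult_lt_0_compat; [apply Rmult_lt_0_compat|]; lra).
  split.
  - assert (0 <= s * (1 - s) * ((U - V) * (U - V)) / (U * V * W)).
    { unfold Rdiv. apply Rmult_le_pos; [|left; apply Rinv_0_lt_compat; lra].
      apply Rmult_le_pos; [apply Rmult_le_pos; lra | apply Rle_0_sqr]. }
    lra.
  - intros HUV Hs'.
    assert (0 < s * (1 - s) * ((U - V) * (U - V)) / (U * V * W)).
    { unfold Rdiv. apply Rmult_lt_0_compat; [|apply Rinv_0_lt_compat; lra].
      apply Rmult_lt_0_compat; [apply Rmult_lt_0_compat; lra|].
      assert (U - V <> 0) by lra. apply Rsqr_pos_lt; auto. }
    lra.
Qed.

Lemma kfun_mono (c w : R) : 0 <= c -> c <= w -> kfun c <= kfun w.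
Proof.
  intros Hc Hw. unfold kfun.
  assert (E : / (c + 1) - / (w + 1) = (w - c) / ((c + 1) * (w + 1))) by (field; lra).
  assert (/ ((c + 1) * (w + 1)) <= 1).
  { rewrite <- Rinv_1. apply Rinv_le_contravar; nra. }
  assert ((w - c) / ((c + 1) * (w + 1)) <= w - c).
  { unfold Rdiv. assert (0 <= w - c) by lra.
    assert (0 <= / ((c + 1) * (w + 1))) by (left; apply Rinv_0_lt_compat; nra).
    nra. }
  lra.
Qed.

Lemma kfun_convex (a b s : R) : 0 <= a -> 0 <= b -> 0 <= s <= 1 ->
  kfun (s * a + (1 - s) * b) <= s * kfun a + (1 - s) * kfun b /\
  (a <> b -> 0 < s < 1 ->
   kfun (s * a + (1 - s) * b) < s * kfun a + (1 - s) * kfun b).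
Proof.
  intros Ha Hb Hs.
  destruct (inv_convex (a + 1) (b + 1) s) as [H1 H2]; try lra.
  replace (s * (a + 1) + (1 - s) * (b + 1)) with (s * a + (1 - s) * b + 1) in H1, H2 by ring.
  unfold kfun, Rdiv in *. split.
  - nra.
  - intros Hab Hs'. specialize (H2 ltac:(lra) Hs'). nra.
Qed.

Lemma phi_inj (Phi : R -> R) : young Phi -> (forall t, 0 < t -> Phi t <> 0) ->
  forall x y, 0 <= x -> x < y -> Phi x < Phi y.
Proof.
  intros [Hnn [Hcv [H0 _]]] Hpos x y Hx Hxy.
  assert (Hy : 0 < Phi y) by (destruct (Hnn y ltac:(lra)); [lra| exfalso; apply (Hpos y); lra]).
  destruct (Req_dec x 0) as [->|Hx0].
  - rewrite H0; lra.
  - pose proof (Hcv y 0 (x / y) ltac:(lra) ltac:(lra)) as Hc.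
    assert (0 < x / y < 1).
    { split; [apply Rdiv_lt_0_compat; lra|].
      apply (Rmult_lt_reg_r y); [lra|]. unfold Rdiv. rewrite Rmult_assoc, Rinv_l; lra. }
    replace (x / y * y + (1 - x / y) * 0) with x in Hc by (field; lra).
    rewrite H0 in Hc. nra.
Qed.

Theorem mainTheorem10 (Phi : R -> R) :
  young Phi ->
  (forall t, 0 < t -> Phi t <> 0) ->
  Rbar_lt (Finite 1) (q_index Phi) ->
  exists Psi : R -> R,
    young Psi /\ strictly_convex_nonneg Psi /\ young_equiv Psi Phi.
Proof.
  intros HY Hpos _.
  pose proof HY as [Hnn [Hcv [H0 Hlim]]].
  assert (Hb : forall u, 0 <= u -> u <= kfun u <= 2 * u).
  { intros u Hu. unfold kfun.
    assert (E : 2 * u - 1 + / (u + 1) = u + u * u / (u + 1)) by (field; lra).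
    rewrite E.
    assert (0 <= u * u / (u + 1)) by (apply Rmult_le_pos; [nra|left; apply Rinv_0_lt_compat; lra]).
    assert (u * u / (u + 1) <= u).
    { apply (Rmult_le_reg_r (u + 1)); [lra|]. unfold Rdiv.
      rewrite Rmult_assoc, Rinv_l; nra. }
    lra. }
  exists (fun t => kfun (Phi t)).
  assert (Hconv : forall x y s, 0 <= x -> 0 <= y -> 0 <= s <= 1 ->
    Phi (s * x + (1 - s) * y) <= s * Phi x + (1 - s) * Phi y) by exact Hcv.
  split; [|split].
  - split; [|split; [|split]].
    + intros t Ht. pose proof (Hnn t Ht). pose proof (Hb _ H). lra.
    + intros x y s Hx Hy Hs.
      assert (0 <= s * x + (1 - s) * y) by nra.
      eapply Rle_trans.
      * apply kfun_mono; [apply Hnn; auto| apply Hcv; auto].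
      * apply kfun_convex; auto.
    + rewrite H0. unfold kfun. replace (0 + 1) with 1 by ring. rewrite Rinv_1. ring.
    + apply (is_lim_le_p_loc Phi); [|exact Hlim].
      exists 0. intros t Ht. pose proof (Hnn t ltac:(lra)). pose proof (Hb _ H). lra.
  - intros x y s Hx Hy Hxy Hs.
    assert (0 <= s * x + (1 - s) * y) by nra.
    assert (Phi x <> Phi y).
    { destruct (Rlt_dec x y).
      - pose proof (phi_inj Phi HY Hpos x y Hx r). lra.
      - pose proof (phi_inj Phi HY Hpos y x Hy ltac:(lra)). lra. }
    eapply Rle_lt_trans.
    + apply kfun_mono; [apply Hnn; auto| apply Hcv; auto; lra].
    + apply kfun_convex; auto; lra.
  - exists 2. split; [lra|]. intros t Ht.
    pose proof (Hnn t Ht). pose proof (Hb _ H). split; lra.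
Qed.
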